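(* Let $M_-,M_+\in\mathbb{Z}$ with $M:=M_-+M_+\ge0$, and let $V_{M_-,M_+}\in\mathbb{R}^{(M+1)\times(M+1)}$ be the Vandermonde matrix with entries $(V_{M_-,M_+})_{ij}=(i-1-M_-)^{j-1}$, $1\le i,j\le M+1$ (with $0^0=1$). Then $V_{M_-,M_+}$ is invertible and: (i) for all $i,j\in\{1,\dots,M+1\}$, $$(V_{M_-,M_+}^{-1})_{ij}=\sum_{n=0}^{M+1-i}(M_-)^n\binom{n+i-1}{n}(V_{0,M}^{-1})_{i+n,j};$$ (ii) for all $i,j\in\{1,\dots,M+1\}$, $$(V_{0,M}^{-1})_{ij}=(-1)^{i+j}\sum_{k=1}^{M+1}\frac{1}{(k-1)!}\binom{k-1}{j-1}\left[{k-1\atop i-1}\right];$$ (iii) defining $\nu_{M_-,M_+,m,k}:=\sum_{\ell=-M_-}^{M_+}(V_{M_-,M_+}^{-1})_{m+1,\ell+M_-+1}\,\ell^k$, one has $\nu_{M_-,M_+,m,k}=\delta_{mk}$ for $0\le k\le M$, $0\le m\le M$; (iv) $\sum_{m=0}^{M}\nu_{M_-,M_+,m,k}\,\ell^m=\ell^k$ for all $k\in\mathbb{N}_0$ and all $\ell\in\{-M_-,\dots,M_+\}$.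
   Context: $\left[{n\atop k}\right]$ denotes the unsigned Stirling numbers of the first kind (number of permutations of $n$ elements with exactly $k$ cycles), satisfying $\left[{n\atop 0}\right]=\delta_{n0}$ and $\left[{n+1\atop k}\right]=n\left[{n\atop k}\right]+\left[{n\atop k-1}\right]$. $V_{0,M}$ is the matrix above with $M_-=0$, $M_+=M$, i.e. entries $(i-1)^{j-1}$. *)

(* Defs.v *)
From mathcomp Require Import all_boot all_order all_algebra.
Set Implicit Arguments. Unset Strict Implicit. Unset Printing Implicit Defensive.
Import Order.TTheory GRing.Theory Num.Theory.
Local Open Scope ring_scope.

Fixpoint stirling1 (n k : nat) : nat :=
  match n, k with
  | 0, 0 => 1
  | 0, _.+1 => 0
  | _.+1, 0 => 0
  | n'.+1, k'.+1 => (n' * stirling1 n' k'.+1 + stirling1 n' k')%N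
  end.

(* Vandermonde matrix V_{Mm, M - Mm} of size n = M+1, 0-based indices:
   entry (i, j) = (i - Mm)^j, with 0^0 = 1 (expr0). *)
Definition vdm (R : ringType) (Mm : int) (n : nat) : 'M[R]_n :=
  \matrix_(i < n, j < n) (((i : nat)%:Z - Mm)%:~R) ^+ j.

(* nu_{Mm,Mp,m,k} = sum_{l=-Mm}^{Mp} (V^{-1})_{m+1, l+Mm+1} l^k, where M = Mm+Mp;
   here the summation index is l' = l + Mm in {0..M}. *)
Definition nu (R : fieldType) (Mm : int) (M : nat) (m k : nat) : R :=
  \sum_(l < M.+1)
    invmx (vdm R Mm M.+1) (inord m) l * ((((l : nat)%:Z - Mm)%:~R) ^+ k).

(* Main.v *)
Require Import Defs.
From mathcomp Require Import all_boot all_order all_algebra.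
From mathcomp Require Import ring zify.
Import Order.TTheory GRing.Theory Num.Theory.
Local Open Scope ring_scope.

Definition VN (R : realFieldType) n (x : nat -> R) : 'M[R]_n :=
  \matrix_(r < n, j < n) x r ^+ j.
Definition PM (R : realFieldType) n (d : R) : 'M[R]_n :=
  \matrix_(i < n, j < n) (('C(j, i))%:R * d ^+ (j - i)).
Arguments VN {R} n x.
Arguments PM {R} n d.
Lemma VNE (R : realFieldType) n (x : nat -> R) r j : VN n x r j = x r ^+ j.
Proof. by rewrite /VN mxE. Qed.
Lemma PME (R : realFieldType) n (d : R) i j : PM n d i j = ('C(j, i))%:R * d ^+ (j - i).
Proof. by rewrite /PM mxE. Qed.

Lemma VNP (R : realFieldType) n (x : nat -> R) d :
  VN n x *m PM n d = VN n (fun r => x r + d).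
Proof.
apply/matrixP => r j; rewrite mxE VNE.
rewrite (addrC (x r)) exprDn.
rewrite (big_ord_widen n (fun i => d ^+ (j - i) * x r ^+ i *+ 'C(j, i))) ?ltn_ord //.
rewrite [RHS]big_mkcond /=; apply: eq_bigr => a _; rewrite VNE PME.
case: ifP => h; first by rewrite -mulr_natr; ring.
by rewrite bin_small ?mul0r ?mulr0 //; rewrite ltnNge -ltnS h.
Qed.

Lemma PM0 (R : realFieldType) n : PM n (0 : R) = 1%:M.
Proof.
apply/matrixP => a j; rewrite PME mxE expr0n.
case: (ltngtP a j) => h.
- rewrite subn_eq0 leqNgt h mulr0; case: eqP => // e; move: h; rewrite e ltnn //.
- rewrite bin_small // mul0r; case: eqP => // e; move: h; rewrite e ltnn //.
- by rewrite h subnn binn mulr1 (_ : a = j) ?eqxx //; apply/val_inj.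
Qed.

Lemma stirSS k i : stirling1 k.+1 i.+1 = (k * stirling1 k i.+1 + stirling1 k i)%N.
Proof. by []. Qed.
Lemma stirS0 k : stirling1 k.+1 0 = 0%N.
Proof. by []. Qed.
Lemma stir00 : stirling1 0 0 = 1%N.
Proof. by []. Qed.
Lemma stir0S i : stirling1 0 i.+1 = 0%N.
Proof. by []. Qed.

Lemma stir_rise (R : realFieldType) (y : R) k N : (k <= N)%N ->
  \sum_(i < N.+1) (stirling1 k i)%:R * y ^+ i = \prod_(t < k) (y + t%:R).
Proof.
elim: k N => [|k IH] N hk.
  rewrite big_ord_recl big1 ?big_ord0 ?addr0 ?stir00 ?mulr1 // => i _.
  by rewrite lift0 stir0S mul0r.
case: N hk => [//|N] hk.
have hp : \prod_(t < k.+1) (y + t%:R) = \prod_(t<k) (y + t%:R) * (y + k%:R).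
  by rewrite big_ord_recr.
rewrite [LHS]big_ord_recl stirS0 mul0r add0r hp.
under eq_bigr => i _ do rewrite lift0 stirSS natrD natrM mulrDl exprS.
rewrite big_split.
have h1 := IH N.+1 (leqW hk); rewrite big_ord_recl in h1.
have h2 := IH N hk.
have e1 : \sum_(i < N.+1) k%:R * (stirling1 k i.+1)%:R * (y * y ^+ i) =
   k%:R * (\prod_(t<k) (y + t%:R) - (stirling1 k 0)%:R).
  have e0 : \prod_(t<k) (y + t%:R) - (stirling1 k 0)%:R =
      \sum_(i < N.+1) (stirling1 k i.+1)%:R * y ^+ i.+1.
    apply/eqP; rewrite subr_eq -h1 expr0 mulr1 addrC; apply/eqP; congr (_ + _).
  rewrite e0 big_distrr; apply: eq_bigr => i _.
  by rewrite /= exprS; ring.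
have e2 : \sum_(i < N.+1) (stirling1 k i)%:R * (y * y ^+ i) = y * \prod_(t<k) (y + t%:R).
  by rewrite -h2 big_distrr; apply: eq_bigr => i _; rewrite mulrCA.
rewrite e1 e2 mulrBr.
have -> : k%:R * (stirling1 k 0)%:R = 0 :> R by case: (k) => [|k']; rewrite ?mul0r ?stirS0 ?mulr0.
by rewrite /= subr0; ring.
Qed.

Lemma ffact_neg (R : realFieldType) (r k : nat) :
  \prod_(t < k) (- r%:R + t%:R : R) = (-1) ^+ k * (r ^_ k)%:R.
Proof.
elim: k => [|k IH]; first by rewrite big_ord0 expr0 ffactn0 mul1r.
rewrite big_ord_recr /= IH ffactnSr natrM exprS.
case: (leqP k r) => h; first by rewrite natrB //; ring.
by rewrite ffact_small // !(mul0r, mulr0).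
Qed.

Lemma VN_unit (R : realFieldType) n (x : nat -> R) :
  (forall i j, (i < n)%N -> (j < n)%N -> x i = x j -> i = j) -> VN n x \in unitmx.
Proof.
move=> inj.
have -> : VN n x = (Vandermonde n (\row_(j < n) x j))^T.
  by apply/matrixP => i j; rewrite VNE !mxE.
rewrite unitmxE det_tr det_Vandermonde unitfE.
apply/prodf_neq0 => i _; apply/prodf_neq0 => j ij; rewrite !mxE subr_eq0.
apply/eqP => /inj e; have := e (ltn_ord j) (ltn_ord i).
by move=> ej; move: ij; rewrite ej ltnn.
Qed.

Lemma V0_unit (R : realFieldType) n : VN n (fun r => r%:R : R) \in unitmx.
Proof. by apply: VN_unit => i j _ _ /eqP; rewrite eqr_nat => /eqP. Qed.

Lemma PMM (R : realFieldType) n (c d : R) : PM n c *m PM n d = PM n (c + d).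
Proof.
have U := V0_unit R n.
apply: (can_inj (mulKmx U)); rewrite mulmxA !VNP.
by apply/matrixP => i j; rewrite !VNE addrA.
Qed.

Definition Wmx (R : realFieldType) n : 'M[R]_n :=
  \matrix_(i < n, j < n) ((-1) ^+ (i + j) *
       \sum_(k < n) (k`!%:R)^-1 * ('C(k, j))%:R * (stirling1 k i)%:R).

Lemma VW (R : realFieldType) N : VN N.+1 (fun r => r%:R : R) *m Wmx R N.+1 = 1%:M.
Proof.
have -> : (1%:M : 'M[R]_N.+1) = (PM N.+1 (-1) *m PM N.+1 1)^T.
  by rewrite PMM addNr PM0 trmx1.
apply/matrixP => r j; rewrite !mxE.
under eq_bigr => i _ do rewrite VNE mxE big_distrr big_distrr /=.
rewrite exchange_big /=; apply: eq_bigr => k _.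
rewrite !PME expr1n mulr1.
transitivity ((k`!%:R : R)^-1 * ('C(k, j))%:R * (-1) ^+ j *
   \sum_(i < N.+1) (stirling1 k i)%:R * (- (r : nat)%:R) ^+ i).
  rewrite big_distrr; apply: eq_bigr => i _ /=; rewrite exprD (exprNn ((r : nat)%:R)).
  move: ((k`!%:R : R)^-1) ('C(k, j)%:R : R) ((stirling1 k i)%:R : R) ((r : nat)%:R : R) => a b c d.
  move: ((-1) ^+ i : R) ((-1) ^+ j : R) (d ^+ i) => e f g.
  ring.
have hk : (k <= N)%N by rewrite -ltnS.
rewrite (stir_rise _ _ _ _ hk) ffact_neg -bin_ffact natrM.
have hf : (k`!%:R : R) != 0 by rewrite pnatr_eq0 -lt0n fact_gt0.
case: (leqP j k) => hjk; last first.
  by rewrite bin_small // !(mul0r, mulr0).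
have -> : (-1) ^+ (k - j) = (-1) ^+ j * (-1) ^+ k :> R.
  rewrite -exprD (_ : (j + k) = (k - j) + j * 2)%N; last by lia.
  by rewrite exprD exprM sqrr_sign mulr1.
move: (k`!%:R : R) hf ('C(k, j)%:R : R) ('C(r, k)%:R : R) ((-1) ^+ j : R) ((-1) ^+ k : R).
by move=> a ha b c e f; field.
Qed.

Lemma inv_eq (R : realFieldType) n (A B : 'M[R]_n) : A *m B = 1%:M -> invmx A = B.
Proof.
move=> h; have [uA _] := mulmx1_unit h.
by rewrite -[invmx A]mulmx1 -h mulmxA mulVmx // mul1mx.
Qed.

Lemma vdmE (R : realFieldType) (c : int) n :
  vdm R c n = VN n (fun r => r%:R : R) *m PM n (- c%:~R).
Proof.
rewrite VNP; apply/matrixP => i j; rewrite /vdm mxE VNE intrB //.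
Qed.

Lemma vdm_entry (R : realFieldType) (c : int) n (i j : 'I_n) :
  vdm R c n i j = ((((i : nat)%:Z - c)%:~R) : R) ^+ j.
Proof. by rewrite /vdm mxE. Qed.

Lemma vdm_inv (R : realFieldType) (c : int) N :
  vdm R c N.+1 *m (PM N.+1 (c%:~R) *m Wmx R N.+1) = 1%:M.
Proof.
by rewrite vdmE -mulmxA (mulmxA (PM _ _)) PMM addNr PM0 mul1mx VW.
Qed.

Lemma vdm_unit (R : realFieldType) (c : int) N : vdm R c N.+1 \in unitmx.
Proof. by have [] := mulmx1_unit (vdm_inv R c N). Qed.

Lemma vdm_invE (R : realFieldType) (c : int) N :
  invmx (vdm R c N.+1) = PM N.+1 (c%:~R) *m Wmx R N.+1.
Proof. exact: inv_eq (vdm_inv R c N). Qed.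

Lemma vdm0_invE (R : realFieldType) N : invmx (vdm R 0 N.+1) = Wmx R N.+1.
Proof. by rewrite vdm_invE PM0 mul1mx. Qed.

Theorem lemma7 (R : realFieldType) (Mm Mp : int) (M : nat)
  (hM : Mm + Mp = M%:Z) :
  vdm R Mm M.+1 \in unitmx /\
  (* (i) *)
  (forall i j : 'I_M.+1,
     invmx (vdm R Mm M.+1) i j =
     \sum_(0 <= n < M.+1 - i)
        (Mm%:~R) ^+ n * ('C(n + i, n))%:R * invmx (vdm R 0 M.+1) (inord (i + n)) j) /\
  (* (ii) *)
  (forall i j : 'I_M.+1,
     invmx (vdm R 0 M.+1) i j =
     (-1) ^+ (i + j) *
       \sum_(k < M.+1) (k`!%:R)^-1 * ('C(k, j))%:R * (stirling1 k i)%:R) /\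
  (* (iii) *)
  (forall m k : nat, (m <= M)%N -> (k <= M)%N ->
     nu R Mm M m k = (m == k)%:R) /\
  (* (iv) *)
  (forall (k : nat) (l : int), - Mm <= l <= Mp ->
     \sum_(m < M.+1) nu R Mm M m k * (l%:~R) ^+ m = (l%:~R) ^+ k).
Proof.
have U := vdm_unit R Mm M.
split; first exact: U.
split.
  move=> i j; rewrite vdm_invE vdm0_invE mxE.
  pose F a := ('C(a, i))%:R * (Mm%:~R : R) ^+ (a - i) * Wmx R M.+1 (inord a) j.
  transitivity (\sum_(0 <= a < M.+1) F a).
    rewrite big_mkord; apply: eq_bigr => a _; by rewrite /F PME inord_val.
  rewrite (big_cat_nat _ (n := i)) //= ?leq0n; last exact: ltnW.
  rewrite big1_seq ?add0r; last first.
    move=> a /andP[_]; rewrite mem_index_iota => /andP[_ ha].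
    by rewrite /F bin_small // !mul0r.
  rewrite -{1}(add0n i) big_addn; apply: eq_big_nat => t /andP[_ ht].
  rewrite /F addnK addnC.
  have hb : 'C(i + t, i) = 'C(i + t, t) by rewrite -bin_sub ?leq_addr // addKn.
  by rewrite hb; congr (_ * _); exact: mulrC.
split.
  by move=> i j; rewrite vdm0_invE mxE.
split.
  move=> m k hm hk.
  have e : nu R Mm M m k =
      (invmx (vdm R Mm M.+1) *m vdm R Mm M.+1) (inord m) (inord k).
    rewrite mxE /nu; apply: eq_bigr => l _.
    by rewrite vdm_entry inordK.
  by rewrite e mulVmx // mxE -val_eqE /= !inordK.
move=> k l /andP[h1 h2].
have hl0 : 0 <= l + Mm by lia.
pose l0 : 'I_M.+1 := inord (absz (l + Mm)).
have hl : ((l0 : nat)%:Z - Mm) = l.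
  rewrite inordK; first by rewrite gez0_abs // addrK.
  lia.
transitivity (\sum_(m < M.+1) nu R Mm M m k * vdm R Mm M.+1 l0 m).
  by apply: eq_bigr => m _; rewrite vdm_entry hl.
rewrite /nu.
under eq_bigr => m _ do rewrite inord_val big_distrl.
rewrite exchange_big /=.
transitivity (\sum_(l' < M.+1) (((l' : nat)%:Z - Mm)%:~R : R) ^+ k *
   (vdm R Mm M.+1 *m invmx (vdm R Mm M.+1)) l0 l').
  apply: eq_bigr => l' _; rewrite mxE big_distrr; apply: eq_bigr => m _ /=.
  move: (invmx (vdm R Mm M.+1) m l') (vdm R Mm M.+1 l0 m) => a c.
  move: ((((l' : nat)%:Z - Mm)%:~R : R) ^+ k) => b.
  ring.
rewrite mulmxV // (bigD1 l0) //= mxE eqxx mulr1 big1 ?addr0; first by rewrite hl.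
by move=> l' hl'; rewrite mxE eq_sym (negbTE hl') mulr0.
Qed.
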